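(* Let $\mathbb F$ be any field, $n\ge k>1$, let $\mathcal K\subseteq M_{n\times k}(\mathbb F)$ be a linear variety, let $B^*\subseteq[n]\times[k]$ be a cobasis of $\mathcal M(\mathcal K)$, let $1\le j'\le k$ be such that $B^*\cap([n]\times\{j'\})=\varnothing$, let $1\le i'\le n$ and $c_1,\dots,c_n\in\mathbb F$. Put $$\mathcal K'=\{X(i'|j') : X\in\mathcal K,\ X_{i\,j'}=c_i\text{ for all }1\le i\le n\}\subseteq M_{(n-1)\times(k-1)}(\mathbb F).$$ Then: (a) $\mathcal K'$ is a linear variety; (b) $\operatorname{codim}(\mathcal K')\le\operatorname{codim}(\mathcal K)-|B^*\cap(\{i'\}\times[k])|$; (c) if ${B'}^*$ is a cobasis of $\mathcal M(\mathcal K')$, then $\big(B^*\cap(\{i'\}\times[k])\big)\cup\iota({B'}^* )$ is a coindependent set of $\mathcal M(\mathcal K)$; (d) if $\det_{n,k}(X)=0$ for all $X\in\mathcal K$ and $c_i=\delta_{i\,i'}$ for all $i$, then $\det_{n-1,k-1}(X')=0$ for all $X'\in\mathcal K'$.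
   Context: $X(i'|j')$ denotes the matrix obtained from $X$ by deleting row $i'$ and column $j'$. The map $\iota=\iota^{(i',j')}:[n-1]\times[k-1]\to[n]\times[k]$ is $\iota(a,b)=(a',b')$ with $a'=a+1$ if $a\ge i'$ and $a'=a$ otherwise, $b'=b+1$ if $b\ge j'$ and $b'=b$ otherwise (it sends the position of an entry of $X(i'|j')$ to its position in $X$). A linear variety is a nonempty set $\mathbf s+V$ with $V$ a linear subspace (uniquely determined); codimension = ambient dimension minus $\dim V$ (ambient spaces $M_{n\times k}$ and $M_{(n-1)\times(k-1)}$ respectively). Identify $M_{n\times k}(\mathbb F)$ with $\mathbb F^{[n]\times[k]}$. Matroid $\mathcal M(\mathcal K)$ of $\mathcal K=\mathbf s+V\subseteq\mathbb F^E$: matroid on $E$ with rank function $r(S)=\dim\operatorname{span}\{x_e|_V:e\in S\}$, $x_e$ coordinate functionals. Cobasis = complement of a basis; coindependent set = subset of a cobasis. Cullis' determinant: $\det_{n,k}(X)=\sum_{c}\operatorname{sgn}(c)\det(X[c|))$, sum over $k$-subsets $c=\{c(1)<\dots<c(k)\}$ of $[n]$, $X[c|)$ the submatrix of rows in $c$, $\operatorname{sgn}(c)=(-1)^{\sum_\alpha(c(\alpha)-\alpha)}$. *)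

(* Defs.v *)
From HB Require Import structures.
From mathcomp Require Import all_boot all_order all_algebra all_fingroup.
Set Implicit Arguments. Unset Strict Implicit. Unset Printing Implicit Defensive.
Import GRing.Theory.
Local Open Scope ring_scope.

Section Defs.
Variable F : fieldType.

Definition linvar_dir m p (K : 'M[F]_(m, p) -> Prop) (V : {vspace 'M[F]_(m, p)}) : Prop :=
  (exists s, K s) /\ forall s X, K s -> (K X <-> (X - s) \in V).

Definition is_linvar m p (K : 'M[F]_(m, p) -> Prop) : Prop :=
  exists V, linvar_dir K V.

Definition coord_restr m p (V : {vspace 'M[F]_(m, p)}) (e : 'I_m * 'I_p)
  : 'Hom(subvs_of V, F^o) :=
  linfun (fun v : subvs_of V => ((vsval v : 'M[F]_(m, p)) e.1 e.2 : F^o)).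

(* rank function of the matroid M(K), K with direction V *)
Definition mrank m p (V : {vspace 'M[F]_(m, p)}) (S : {set 'I_m * 'I_p}) : nat :=
  \dim (span [seq coord_restr V e | e <- enum S]).

Definition mindep m p (V : {vspace 'M[F]_(m, p)}) (S : {set 'I_m * 'I_p}) : Prop :=
  mrank V S = #|S|.

Definition mbasis m p (V : {vspace 'M[F]_(m, p)}) (S : {set 'I_m * 'I_p}) : Prop :=
  mindep V S /\ mrank V S = mrank V setT.

Definition mcobasis m p (V : {vspace 'M[F]_(m, p)}) (S : {set 'I_m * 'I_p}) : Prop :=
  mbasis V (~: S).

Definition mcoindep m p (V : {vspace 'M[F]_(m, p)}) (S : {set 'I_m * 'I_p}) : Prop :=
  exists C, mcobasis V C /\ S \subset C.

Definition minor_variety m p (K : 'M[F]_(m, p) -> Prop) (i' : 'I_m) (j' : 'I_p)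
  (c : 'I_m -> F) : 'M[F]_(m.-1, p.-1) -> Prop :=
  fun Y => exists X, [/\ K X, (forall i, X i j' = c i) & Y = row' i' (col' j' X)].

Definition iota_ij m p (i' : 'I_m) (j' : 'I_p) (e : 'I_m.-1 * 'I_p.-1) : 'I_m * 'I_p :=
  (lift i' e.1, lift j' e.2).

(* Cullis' determinant: k-subsets c of [m] are encoded as strictly increasing
   maps 'I_p -> 'I_m (c(1) < ... < c(p)); X[c|) = rowsub f X. *)
Definition cullis m p (X : 'M[F]_(m, p)) : F :=
  \sum_(f : {ffun 'I_p -> 'I_m} | [forall a : 'I_p, forall b : 'I_p, (a < b)%N ==> (f a < f b)%N])
     (-1) ^+ (\sum_(a : 'I_p) (f a - a))%N * \det (rowsub f X).

End Defs.

(* Main.v *)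
Require Import Defs.
From HB Require Import structures.
From mathcomp Require Import all_boot all_order all_algebra all_fingroup.
Import GRing.Theory.
Local Open Scope ring_scope.
From Stdlib Require Import Classical.
From mathcomp Require Import zify.

Lemma linfunE' (R : fieldType) (aT rT : vectType R) (f : aT -> rT) (fL : linear f) x :
  linfun f x = f x.
Proof.
pose lf : {linear aT -> rT} := HB.pack f (GRing.isLinear.Build _ _ _ _ f fL).
exact: (lfunE lf x).
Qed.

Section LA.
Variables (F : fieldType) (m p : nat) (V : {vspace 'M[F]_(m, p)}).

Lemma crE e w : coord_restr V e w = vsval w e.1 e.2.
Proof.
rewrite /coord_restr linfunE' // => a u v /=.
by rewrite !mxE.
Qed.

Lemma evalspan es g (w : subvs_of V) : g \in <<[seq coord_restr V e | e <- es]>>%VS ->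
  (forall e, e \in es -> vsval w e.1 e.2 = 0) -> g w = 0.
Proof.
move=> /(@coord_span _ _ _ (in_tuple _)) -> hw.
rewrite sum_lfunE big1 // => i _; rewrite scale_lfunE.
have : (in_tuple [seq coord_restr V e | e <- es])`_i \in [seq coord_restr V e | e <- es].
  by apply: mem_nth; exact: ltn_ord.
case/mapP=> e he ->; rewrite crE hw //.
by rewrite scaler0.
Qed.

Lemma ann es (g : 'Hom(subvs_of V, F^o)) : (forall w : subvs_of V, (forall e, e \in es -> vsval w e.1 e.2 = 0) -> g w = 0) ->
  g \in <<[seq coord_restr V e | e <- es]>>%VS.
Proof.
move=> hg.
set X := [seq coord_restr V e | e <- es].
pose q := size X.
pose phif := fun w : subvs_of V => \row_(i < q) (X`_i w : F).
have phiL : linear phif.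
  by move=> a u v; apply/rowP => i; rewrite !mxE linearP.
pose Phi : 'Hom(subvs_of V, 'rV[F]_q) := linfun phif.
have PhiE w : Phi w = phif w by rewrite linfunE'.
pose h := (g \o Phi^-1 \o projv (limg Phi))%VF.
have hPhi w : h (Phi w) = g w.
  rewrite /h !comp_lfunE projv_id ?memv_img ?memvf //.
  set w' := (Phi^-1)%VF (Phi w).
  have Ew : Phi w' = Phi w by rewrite limg_lfunVK // memv_img ?memvf.
  apply/eqP; rewrite -subr_eq0 -linearB /=; apply/eqP/hg => e he.
  have ie : (index (coord_restr V e) X < q)%N by rewrite index_mem map_f.
  have := congr1 (fun M : 'rV[F]_q => M 0 (Ordinal ie)) (congr1 (fun x => Phi w - x) Ew).
  rewrite subrr -linearB /= PhiE !mxE /= nth_index ?map_f // crE.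
  by rewrite linearB /= !mxE => /eqP; rewrite subr_eq0 => /eqP ->; rewrite subrr.
have -> : g = \sum_(i < q) h (delta_mx 0 i) *: X`_i.
  apply/lfunP => w; rewrite sum_lfunE -hPhi {1}(row_sum_delta (Phi w)) linear_sum.
  apply: eq_bigr => i _; rewrite linearZ scale_lfunE PhiE !mxE /=.
  exact: mulrC.
apply: rpred_sum => i _; apply: rpredZ; apply: memv_span; exact: mem_nth.
Qed.

Definition fsq (S : {set 'I_m * 'I_p}) := [seq coord_restr V e | e <- enum S].

Lemma mrankE S : mrank V S = \dim <<fsq S>>. Proof. by []. Qed.

Lemma sep S v : mrank V S = mrank V setT -> v \in V ->
  (forall e, e \in S -> v e.1 e.2 = 0) -> v = 0.
Proof.
move=> hr vV hv.
have sub : (<<fsq S>> <= <<fsq setT>>)%VS.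
  by apply: sub_span => x /mapP [e _ ->]; apply: map_f; rewrite mem_enum inE.
have eqs : <<fsq S>>%VS = <<fsq setT>>%VS.
  by apply/eqP; rewrite eqEdim sub /= -!mrankE hr.
apply/matrixP => i j; rewrite mxE.
have := @evalspan (enum S) (coord_restr V (i, j)) (vsproj V v).
rewrite crE vsprojK //; apply.
  by rewrite -/(fsq S) eqs; apply: memv_span; apply: map_f; rewrite mem_enum inE.
by move=> e; rewrite mem_enum; apply: hv.
Qed.

Lemma extract (T : {set 'I_m * 'I_p}) : (forall v, v \in V -> (forall t, t \in T -> v t.1 t.2 = 0) -> v = 0) ->
  exists B0 : {set 'I_m * 'I_p}, B0 \subset T /\ mbasis V B0.
Proof.
move=> hT.
pose P := fun B : {set 'I_m * 'I_p} => (B \subset T) && (mrank V B == #|B|).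
have P0 : P set0 by rewrite /P sub0set mrankE /fsq enum_set0 /= span_nil dimv0 cards0.
have [B0 /maxsetP [/andP [BT /eqP Bind] Bmax] _] := maxset_exists P0.
have inspan t : t \in T -> coord_restr V t \in <<fsq B0>>%VS.
  move=> tT; apply/negPn/negP => nt.
  have tB : t \notin B0.
    apply/negP => tB; move/negP: nt; apply; apply/memv_span/map_f; by rewrite mem_enum.
  have P1 : P (t |: B0).
    rewrite /P subUset sub1set tT BT /=.
    rewrite mrankE cardsU1 tB.
    have -> : <<fsq (t |: B0)>>%VS = <<coord_restr V t :: fsq B0>>%VS.
      apply: eq_span => x; rewrite inE; apply/mapP/orP.
        case=> e; rewrite mem_enum in_setU1 => /orP [/eqP -> ->|eB ->]; first by left.
        by right; apply: map_f; rewrite mem_enum.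
      case=> [/eqP ->|/mapP [e eB ->]]; first by exists t; rewrite // mem_enum setU11.
      by exists e; rewrite // mem_enum in_setU1 -mem_enum eB orbT.
    have fr : free (coord_restr V t :: fsq B0).
      rewrite free_cons nt /free /=; apply/eqP.
      by rewrite -mrankE Bind size_map cardE.
    by move/eqP: fr => ->; rewrite /= size_map -cardE.
  have := Bmax _ P1 (subsetUr _ _) => E.
  by move: tB; rewrite -E setU11.
have ker0 v : v \in V -> (forall b, b \in B0 -> v b.1 b.2 = 0) -> v = 0.
  move=> vV hv; apply: hT => // t tT.
  have := @evalspan (enum B0) (coord_restr V t) (vsproj V v) (inspan t tT).
  rewrite crE vsprojK //; apply=> e; rewrite mem_enum; exact: hv.
have full : (<<fsq setT>> <= <<fsq B0>>)%VS.
  apply/span_subvP => x /mapP [e _ ->]; apply: ann => w hw.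
  rewrite crE (ker0 (vsval w)) ?subvsP ?mxE // => b bB; apply: hw; by rewrite mem_enum.
have sub : (<<fsq B0>> <= <<fsq setT>>)%VS.
  by apply: sub_span => x /mapP [e _ ->]; apply: map_f; rewrite mem_enum inE.
exists B0; split => //; split => //.
by apply/eqP; rewrite eqn_leq !mrankE (dimvS sub) (dimvS full).
Qed.

Lemma unit_vec B e0 : mindep V B -> e0 \in B ->
  exists2 u, u \in V & (u e0.1 e0.2 = 1 /\ forall e, e \in B -> e != e0 -> u e.1 e.2 = 0).
Proof.
move=> hB e0B.
set es := enum (B :\ e0).
have nin : coord_restr V e0 \notin <<[seq coord_restr V e | e <- es]>>%VS.
  apply/negP => hin.
  have : (<<fsq B>> <= <<[seq coord_restr V e | e <- es]>>)%VS.
    apply/span_subvP => x /mapP [e eB ->].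
    have [-> //|ne] := eqVneq e e0.
    by apply: memv_span; apply: map_f; rewrite mem_enum in_setD1 ne -mem_enum.
  move/dimvS; rewrite -mrankE hB.
  move/leq_trans => /(_ _ (dim_span _)); rewrite size_map -cardE.
  by rewrite (cardsD1 e0 B) e0B ltnn.
have : ~ (forall w : subvs_of V, (forall e, e \in es -> vsval w e.1 e.2 = 0) -> coord_restr V e0 w = 0).
  by move=> H; move: nin; rewrite ann.
intro H; apply not_all_ex_not in H; destruct H as [w H]; apply imply_to_and in H; destruct H as [hw nz].
rewrite crE in nz.
exists ((vsval w e0.1 e0.2)^-1 *: vsval w); first by rewrite memvZ ?subvsP.
split; first by rewrite mxE mulVf //; apply/eqP.
move=> e eB ne; rewrite mxE (hw e) ?mulr0 //.
by rewrite /es mem_enum in_setD1 ne.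
Qed.

End LA.
Arguments sep {F m p V S v}.

Lemma udir (F : fieldType) m p (K : 'M[F]_(m, p) -> Prop) V1 V2 :
  linvar_dir K V1 -> linvar_dir K V2 -> V1 = V2.
Proof.
move=> [[s Ks] h1] [_ h2]; apply/vspaceP => x.
have := h1 s (x + s) Ks; have := h2 s (x + s) Ks.
rewrite addrK => [[a b] [c d]].
by apply/idP/idP => H; [apply: a; apply: d | apply: c; apply: b].
Qed.

Arguments udir {F m p K V1 V2}.

Section Main.
Variables (F : fieldType) (n k : nat) (K : 'M[F]_(n, k) -> Prop).
Variables (V : {vspace 'M[F]_(n, k)}) (hKV : linvar_dir K V).
Variables (Bs : {set 'I_n * 'I_k}) (hB : mcobasis V Bs).
Variables (j' : 'I_k) (hj' : forall i : 'I_n, (i, j') \notin Bs).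
Variables (i' : 'I_n) (c : 'I_n -> F).

Definition kapf (X : 'M[F]_(n, k)) : 'rV[F]_n := \row_i X i j'.
Lemma kapL : linear kapf.
Proof. by move=> a X Y; apply/rowP => i; rewrite !mxE. Qed.
Definition kap : 'Hom('M[F]_(n, k), 'rV[F]_n) := linfun kapf.
Lemma kapE X : kap X = kapf X. Proof. exact: linfunE' kapL X. Qed.

Definition pif (X : 'M[F]_(n, k)) : 'M[F]_(n.-1, k.-1) := row' i' (col' j' X).
Lemma piL : linear pif.
Proof. by move=> a X Y; apply/matrixP => i j; rewrite !mxE. Qed.
Definition pim : 'Hom('M[F]_(n, k), 'M[F]_(n.-1, k.-1)) := linfun pif.
Lemma pimE X : pim X = pif X. Proof. exact: linfunE' piL X. Qed.

Definition V0 := (V :&: lker kap)%VS.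
Definition Vp := (pim @: V0)%VS.

Lemma imgfull : (kap @: V)%VS = fullv.
Proof.
apply/eqP; rewrite eqEsubv subvf /=; apply/subvP => y _.
rewrite (row_sum_delta y); apply: rpred_sum => i _; apply: rpredZ.
have iB : (i, j') \in ~: Bs by rewrite inE hj'.
have [u uV [u1 u0]] := @unit_vec F n k V _ _ hB.1 iB.
apply/memv_imgP; exists u => //; rewrite kapE; apply/rowP => i2; rewrite !mxE /=.
have [->|ne] := eqVneq i2 i; first by rewrite u1.
have -> : u i2 j' = 0.
  apply: (u0 (i2, j')); first by rewrite inE hj'.
  by apply/negP => /eqP [] /eqP; rewrite (negbTE ne).
done.
Qed.

Lemma colsurj y : exists2 u, u \in V & kap u = y.
Proof.
have : y \in (kap @: V)%VS by rewrite imgfull memvf.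
by case/memv_imgP => u uV ->; exists u.
Qed.

Lemma dimV0 : (\dim V0 + n)%N = \dim V.
Proof.
by rewrite -(limg_ker_dim kap V) imgfull dimvf /= dim_matrix mul1r.
Qed.

Lemma exX0 : exists X0, K X0 /\ forall i, X0 i j' = c i.
Proof.
have [[s Ks] hK] := hKV.
have [u uV ku] := colsurj (\row_i (c i - s i j')).
exists (s + u); split.
  by apply/(hK s _ Ks); rewrite addrC addKr.
move=> i; have := congr1 (fun r : 'rV[F]_n => r 0 i) ku.
by rewrite kapE !mxE => ->; rewrite addrC subrK.
Qed.

Lemma dirKp : linvar_dir (minor_variety K i' j' c) Vp.
Proof.
have [[s Ks] hK] := hKV.
split.
  have [X0 [KX0 cX0]] := exX0.
  by exists (pif X0); exists X0.
move=> s' Y [X1 [KX1 cX1 ->]]; split.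
  move=> [X [KX cX ->]].
  apply/memv_imgP; exists (X - X1).
    rewrite memv_cap; apply/andP; split.
      by apply/(hK X1 _ KX1).
    rewrite memv_ker kapE; apply/eqP/rowP => i; rewrite !mxE cX cX1.
    by rewrite subrr.
  by rewrite pimE; apply/matrixP => i j; rewrite !mxE.
case/memv_imgP => v; rewrite memv_cap => /andP [vV vk] E.
exists (X1 + v); split.
- by apply/(hK X1 _ KX1); rewrite addrC addKr.
- move=> i; rewrite mxE cX1.
  move: vk; rewrite memv_ker kapE => /eqP /rowP /(_ i); rewrite !mxE => ->.
  by rewrite addr0.
- apply/matrixP => i j; move/matrixP: E => /(_ i j).
  rewrite pimE !mxE => E; by rewrite -E addrC subrK.
Qed.

Lemma iota_inj : injective (@iota_ij n k i' j').
Proof. move=> [a b] [a' b'] E; have E1 := congr1 fst E; have E2 := congr1 snd E; simpl in E1, E2; by rewrite (lift_inj E1) (lift_inj E2). Qed.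

Lemma partb (hk : (1 < k)%N) (hnk : (k <= n)%N) V'' :
  linvar_dir (minor_variety K i' j' c) V'' ->
  (n.-1 * k.-1 - \dim V'' + #|[set e in Bs | e.1 == i']| <= n * k - \dim V)%N.
Proof.
move=> hV; rewrite -(udir dirKp hV).
set W := (V0 :&: lker pim)%VS.
have h1 := limg_ker_dim pim V0.
set D := [set e in ~: Bs | (e.1 == i') && (e.2 != j')].
pose phf := fun X : 'M[F]_(n, k) => \row_(t < #|D|) X (enum_val t).1 (enum_val t).2.
have phL : linear phf by move=> a X Y; apply/rowP => t; rewrite !mxE.
pose ph : 'Hom('M[F]_(n, k), 'rV[F]_#|D|) := linfun phf.
have h2 := limg_ker_dim ph W.
have W0 : (W :&: lker ph)%VS = 0%VS.
  apply/eqP; rewrite -subv0; apply/subvP => v.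
  rewrite !memv_cap !memv_ker => /andP [/andP [/andP [vV kv] pv] phv].
  rewrite memv0; apply/eqP; apply: (sep hB.2 vV) => e eB.
  have [ej|ej] := eqVneq e.2 j'.
    move/eqP/rowP: kv => /(_ e.1); rewrite kapE !mxE ej; done.
  have [ei|ei] := eqVneq e.1 i'.
    have eD : e \in D by rewrite inE eB ei eqxx ej.
    move/eqP/rowP: phv => /(_ (enum_rank_in eD e)); rewrite linfunE' // !mxE.
    by rewrite enum_rankK_in.
  have ie : i' != e.1 by rewrite eq_sym.
  have [a ea _] := unlift_some ie.
  have je : j' != e.2 by rewrite eq_sym.
  have [b eb _] := unlift_some je.
  move/eqP/matrixP: pv => /(_ a b); rewrite pimE !mxE -ea -eb; done.
have dW : (\dim W <= #|D|)%N.
  rewrite -h2 W0 dimv0 add0n; apply: leq_trans (dimvS (subvf _)) _.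
  by rewrite dimvf /= dim_matrix mul1r.
have cD : (#|D| + #|[set e in Bs | e.1 == i']|).+1 = k.
  pose R := setX [set i'] [set: 'I_k].
  have cR : #|R| = k by rewrite cardsX cards1 cardsT card_ord mul1n.
  have HR := cardsID Bs R; rewrite cR in HR; apply: etrans _ HR.
  have -> : R :&: Bs = [set e in Bs | e.1 == i'].
    by apply/setP => -[a b]; rewrite !inE andbT andbC.
  rewrite (cardsD1 (i', j') (R :\: Bs)) !inE eqxx hj' /= addnC addSn.
  have -> : R :\: Bs :\ (i', j') = D.
    apply/setP => -[a b]; rewrite !inE /= xpair_eqE.
    by case: (a == i'); case: (b == j'); case: ((a, b) \in Bs).
  by rewrite add0n addnS.
have dVp : (\dim Vp <= n.-1 * k.-1)%N.
  by apply: leq_trans (dimvS (subvf _)) _; rewrite dimvf /= dim_matrix.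
have dV : (\dim V <= n * k)%N.
  by apply: leq_trans (dimvS (subvf _)) _; rewrite dimvf /= dim_matrix.
have h0 := dimV0.
have E : (n * k = n.-1 * k.-1 + n.-1 + k.-1 + 1)%N.
  have np : n = n.-1.+1 by rewrite prednK // (leq_trans _ hnk) // ltnW.
  have kp : k = k.-1.+1 by rewrite prednK // ltnW.
  rewrite {1}np {1}kp; lia.
have np : n = n.-1.+1 by rewrite prednK // (leq_trans _ hnk) // ltnW.
have kp : k = k.-1.+1 by rewrite prednK // ltnW.
move: h1 h0 dW cD dVp dV E np kp; rewrite -/W -/Vp.
move: (\dim W) (\dim Vp) (\dim V0) (\dim V) (#|D|) (#|[set e in Bs | e.1 == i']|) => d C B A Dd br.
move: (n.-1 * k.-1)%N (n * k)%N n.-1 k.-1 => P Q a b; lia.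
Qed.

Lemma partc V'' Bs' : linvar_dir (minor_variety K i' j' c) V'' -> mcobasis V'' Bs' ->
  mcoindep V ([set e in Bs | e.1 == i'] :|: [set iota_ij i' j' e | e in Bs']).
Proof.
move=> hV hB'; rewrite -(udir dirKp hV) in hB'.
set S := _ :|: _.
have [|B0 [B0T hB0]] := @extract F n k V (~: S).
  move=> v vV hv.
  have col0 i : v i j' = 0.
    apply: (hv (i, j')); rewrite !inE negb_or; apply/andP; split.
      by rewrite (negbTE (hj' i)).
    by apply/imsetP => -[e _ /(congr1 snd)] /= /eqP; rewrite (negbTE (neq_lift _ _)).
  have v0 : v \in V0.
    by rewrite memv_cap vV memv_ker kapE; apply/eqP/rowP => i; rewrite !mxE col0.
  have pv : pim v = 0.
    apply: (sep hB'.2 (memv_img pim v0)) => e eB'.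
    rewrite pimE !mxE; apply: (hv (iota_ij i' j' e)).
    rewrite !inE negb_or (mem_imset _ _ iota_inj); apply/andP; split.
      by rewrite /= eq_sym (negbTE (neq_lift _ _)) andbF.
    by rewrite inE in eB'.
  apply: (sep hB.2 vV) => e eB.
  have [ej|ej] := eqVneq e.2 j'; first by rewrite ej col0.
  have [ei|ei] := eqVneq e.1 i'.
    apply: hv; rewrite !inE negb_or; apply/andP; split.
      by rewrite inE in eB; rewrite (negbTE eB).
    apply/imsetP => -[e' _ E]; move: ei; rewrite E /= => /eqP.
    by rewrite eq_sym (negbTE (neq_lift _ _)).
  have ie : i' != e.1 by rewrite eq_sym.
  have [a ea _] := unlift_some ie.
  have je : j' != e.2 by rewrite eq_sym.
  have [b eb _] := unlift_some je.
  move/matrixP: pv => /(_ a b); rewrite pimE !mxE -ea -eb; done.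
exists (~: B0); split; first by rewrite /mcobasis setCK.
by rewrite subsetC.
Qed.

End Main.

Lemma bumpE h i : bump h i = ((h <= i) + i)%N. Proof. by []. Qed.

Lemma lift_lt n (h : 'I_n) (x y : 'I_n.-1) : (lift h x < lift h y)%N = (x < y)%N.
Proof. rewrite /= !bumpE; case: (leqP h x); case: (leqP h y) => /=; lia. Qed.

Lemma cardlt N t : (t <= N)%N -> #|[set b : 'I_N | (b < t)%N]| = t.
Proof.
move=> tN.
have -> : [set b : 'I_N | (b < t)%N] = [set widen_ord tN b | b : 'I_t].
  apply/setP => b; rewrite inE; apply/idP/imsetP.
    by move=> bt; exists (Ordinal bt) => //; apply: val_inj.
  by case=> b' _ ->; rewrite /= ltn_ord.
rewrite card_imset ?card_ord //.
by move=> x y /(congr1 val) /= /val_inj.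
Qed.

Lemma segcard N (P : pred 'I_N) : (forall x y : 'I_N, (x < y)%N -> P y -> P x) ->
  forall b : 'I_N, P b = (b < #|[set x | P x]|)%N.
Proof.
move=> hP b; case Pb: (P b).
  have sub : [set x : 'I_N | (x < b.+1)%N] \subset [set x | P x].
    apply/subsetP => x; rewrite !inE ltnS leq_eqVlt => /orP [/eqP/val_inj -> //|xb].
    exact: hP xb Pb.
  by have := subset_leq_card sub; rewrite cardlt.
have sub : [set x | P x] \subset [set x : 'I_N | (x < b)%N].
  apply/subsetP => x; rewrite !inE => Px; rewrite ltnNge; apply/negP => bx.
  move: bx; rewrite leq_eqVlt => /orP [/eqP/val_inj E|bx].
    by move: Pb; rewrite E Px.
  by move: Pb; rewrite (hP _ _ bx Px).
have := subset_leq_card sub; rewrite cardlt ?(ltnW (ltn_ord b)) //.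
by rewrite ltnNge => ->.
Qed.

Definition incf a b (f : {ffun 'I_a -> 'I_b}) :=
  [forall x : 'I_a, forall y : 'I_a, (x < y)%N ==> (f x < f y)%N].
Arguments incf {a b}.

Lemma incP a b (f : {ffun 'I_a -> 'I_b}) :
  reflect (forall x y : 'I_a, (x < y)%N -> (f x < f y)%N) (incf f).
Proof.
apply: (iffP forallP) => [H x y xy | H x].
  by have := H x => /forallP /(_ y) /implyP; apply.
by apply/forallP => y; apply/implyP; apply: H.
Qed.

Lemma inc_lt a b (f : {ffun 'I_a -> 'I_b}) : incf f -> forall x y, (f x < f y)%N = (x < y)%N.
Proof.
move/incP => H x y; apply/idP/idP; last exact: H.
move=> fxy; rewrite ltnNge; apply/negP; rewrite leq_eqVlt => /orP [/eqP/val_inj E|yx].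
  by move: fxy; rewrite E ltnn.
by have := H _ _ yx; rewrite ltnNge (ltnW fxy).
Qed.

Lemma inc_ge a b (f : {ffun 'I_a -> 'I_b}) : incf f -> forall x : 'I_a, (x <= f x)%N.
Proof.
move/incP => H.
suff: forall t (x : 'I_a), (x : nat) = t -> (t <= f x)%N by move=> S x; exact: S.
elim=> [//|t IH] x xt.
have ta : (t < a)%N by have := ltn_ord x; lia.
have := IH (Ordinal ta) erefl => le.
by apply: leq_ltn_trans le (H _ _ _); rewrite /= xt.
Qed.

Arguments incP {a b f}.
Arguments inc_lt {a b f}.
Arguments inc_ge {a b f}.

Lemma inc_inj a b (f : {ffun 'I_a -> 'I_b}) : incf f -> injective f.
Proof.
move=> H x y E; apply: val_inj; apply/eqP; rewrite eqn_leq.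
by apply/andP; split; rewrite leqNgt -(inc_lt H) E ltnn.
Qed.
Arguments inc_inj {a b f}.

Lemma lift_ltl n (h : 'I_n) (x : 'I_n.-1) : (lift h x < h)%N = (x < h)%N.
Proof. rewrite /= bumpE; case: (leqP h x) => /=; lia. Qed.
Lemma lift_gtl n (h : 'I_n) (x : 'I_n.-1) : (h < lift h x)%N = (h <= x)%N.
Proof. rewrite /= bumpE; case: (leqP h x) => /=; lia. Qed.

Set Implicit Arguments.
Unset Strict Implicit.

Section Cul.
Variables (F : fieldType) (m q : nat) (i0 : 'I_m.+2).

Definition cnt (g : {ffun 'I_q.+1 -> 'I_m.+1}) := #|[set b | (g b < i0)%N]|.
Definition cp (g : {ffun 'I_q.+1 -> 'I_m.+1}) : 'I_q.+2 := inord (cnt g).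
Lemma cpE (g : {ffun 'I_q.+1 -> 'I_m.+1}) : (cp g : nat) = cnt g.
Proof.
rewrite inordK // ltnS /cnt; apply: leq_trans (max_card _) _.
by rewrite card_ord.
Qed.

Lemma seg (g : {ffun 'I_q.+1 -> 'I_m.+1}) : incf g -> forall b, (g b < i0)%N = (b < cp g)%N.
Proof.
move=> ig b; rewrite cpE /cnt.
apply: (@segcard _ (fun b : 'I_q.+1 => (g b < i0)%N)) => x y xy gy.
by apply: ltn_trans gy; rewrite (inc_lt ig).
Qed.

Definition ins (g : {ffun 'I_q.+1 -> 'I_m.+1}) : {ffun 'I_q.+2 -> 'I_m.+2} :=
  [ffun a => if unlift (cp g) a is Some b then lift i0 (g b) else i0].

Lemma insE1 (g : {ffun 'I_q.+1 -> 'I_m.+1}) b : ins g (lift (cp g) b) = lift i0 (g b).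
Proof. by rewrite ffunE liftK. Qed.
Lemma insE0 (g : {ffun 'I_q.+1 -> 'I_m.+1}) : ins g (cp g) = i0.
Proof. by rewrite ffunE unlift_none. Qed.

Definition pos (f : {ffun 'I_q.+2 -> 'I_m.+2}) : 'I_q.+2 := odflt ord0 [pick a | f a == i0].
Definition rem (f : {ffun 'I_q.+2 -> 'I_m.+2}) : {ffun 'I_q.+1 -> 'I_m.+1} :=
  [ffun b => odflt ord0 (unlift i0 (f (lift (pos f) b)))].


Lemma ins_hit (g : {ffun 'I_q.+1 -> 'I_m.+1}) a : (ins g a == i0) = (a == cp g).
Proof.
case: (unliftP (cp g) a) => [b ->|->]; last by rewrite insE0 !eqxx.
rewrite insE1; apply/idP/idP => /eqP E.
  by move: (neq_lift i0 (g b)); rewrite E eqxx.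
by move: (neq_lift (cp g) b); rewrite E eqxx.
Qed.

Lemma pos_hit (f : {ffun 'I_q.+2 -> 'I_m.+2}) a : f a = i0 -> incf f -> pos f = a.
Proof.
rewrite /pos; case: pickP => [a' /eqP fa' | none] /= fa inc.
  by apply: (inc_inj inc); rewrite fa fa'.
by move: (none a); rewrite fa eqxx.
Qed.

Lemma ins_inc (g : {ffun 'I_q.+1 -> 'I_m.+1}) : incf g -> incf (ins g).
Proof.
move=> ig; apply/incP => x y.
case: (unliftP (cp g) x) => [bx ->|->]; case: (unliftP (cp g) y) => [by_ ->|->];
  rewrite ?insE1 ?insE0 ?ltnn //.
- by rewrite !lift_lt (inc_lt ig).
- by rewrite !lift_ltl (seg ig).
- by rewrite !lift_gtl (leqNgt (cp g)) (leqNgt i0) (seg ig).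
Qed.

Lemma rem_ins (g : {ffun 'I_q.+1 -> 'I_m.+1}) : incf g -> rem (ins g) = g.
Proof.
move=> ig; have pe : pos (ins g) = cp g by apply: pos_hit (ins_inc ig); rewrite insE0.
by apply/ffunP => b; rewrite ffunE pe insE1 liftK.
Qed.

Lemma remE (f : {ffun 'I_q.+2 -> 'I_m.+2}) b : incf f -> f (pos f) = i0 -> lift i0 (rem f b) = f (lift (pos f) b).
Proof.
move=> inf fp.
have ne : i0 != f (lift (pos f) b).
  rewrite -fp; apply/eqP => E; move: (neq_lift (pos f) b).
  by rewrite -(inc_inj inf _ _ E) eqxx.
have [j E1 E2] := unlift_some ne.
by rewrite ffunE E2 /= E1.
Qed.

Lemma rem_inc (f : {ffun 'I_q.+2 -> 'I_m.+2}) : incf f -> f (pos f) = i0 -> incf (rem f).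
Proof.
move=> inf fp; apply/incP => x y xy.
by rewrite -(@lift_lt _ i0 (rem f x) (rem f y)) !remE // (inc_lt inf) lift_lt.
Qed.

Lemma ins_rem (f : {ffun 'I_q.+2 -> 'I_m.+2}) : incf f -> f (pos f) = i0 -> ins (rem f) = f.
Proof.
move=> inf fp; set a0 := pos f.
have cpr : cp (rem f) = a0.
  apply: ord_inj; rewrite cpE /cnt /=.
  have -> : [set b | (rem f b < i0)%N] = [set b : 'I_q.+1 | (b < a0)%N].
    apply/setP => b; rewrite !inE -(@lift_ltl _ i0 (rem f b)) remE //.
    have := inc_lt inf (lift a0 b) a0; rewrite fp => ->.
    by rewrite lift_ltl.
  by rewrite cardlt // -ltnS ltn_ord.
apply/ffunP => a; rewrite ffunE cpr; case: (unliftP a0 a) => [b ->|->].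
  by rewrite remE.
by rewrite fp.
Qed.

Lemma sgn_ins (g : {ffun 'I_q.+1 -> 'I_m.+1}) : incf g ->
  (\sum_(a < q.+2) (ins g a - a) + cp g = i0 + \sum_(b < q.+1) (g b - b))%N.
Proof.
move=> ig.
rewrite (bigD1_ord (cp g)) //= insE0.
have -> : (\sum_(i < q.+1) (ins g (lift (cp g) i) - lift (cp g) i) =
           \sum_(b < q.+1) (g b - b))%N.
  apply: eq_bigr => b _; rewrite insE1 /= !bumpE.
  have := seg ig b; case: (leqP i0 (g b)); case: (leqP (cp g) b) => //=; lia.
have := inc_ge (ins_inc ig) (cp g); rewrite insE0; set S := (\sum_(b < q.+1) _)%N. clearbody S; move: (cp g : nat) (i0 : nat) => a b; lia.
Qed.

Variables (X : 'M[F]_(m.+2, q.+2)) (j0 : 'I_q.+2).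
Hypothesis hX : forall i, X i j0 = (i == i0)%:R.
Let Y := row' i0 (col' j0 X).

Lemma det_nohit (f : {ffun 'I_q.+2 -> 'I_m.+2}) : (forall a, f a != i0) -> \det (rowsub f X) = 0.
Proof.
move=> H; rewrite (expand_det_col _ j0) big1 // => a _.
by rewrite !mxE hX (negbTE (H a)) mul0r.
Qed.

Lemma det_ins (g : {ffun 'I_q.+1 -> 'I_m.+1}) : incf g -> \det (rowsub (ins g) X) = (-1) ^+ (cp g + j0) * \det (rowsub g Y).
Proof.
move=> ig; rewrite (expand_det_col _ j0) (bigD1 (cp g)) //= big1 ?addr0.
  rewrite !mxE insE0 hX eqxx mul1r /cofactor; congr (_ * \det _).
  by apply/matrixP => b c; rewrite !mxE insE1.
move=> a na; rewrite !mxE hX.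
by rewrite ins_hit (negbTE na) mul0r.
Qed.

Lemma cullis_exp : cullis X = (-1) ^+ (i0 + j0) * cullis Y.
Proof.
rewrite /cullis (bigID (fun f : {ffun 'I_q.+2 -> 'I_m.+2} => [exists a, f a == i0])) /=.
rewrite [X in _ + X]big1 ?addr0; last first.
  by move=> f /andP [_ /existsPn nh]; rewrite det_nohit ?mulr0.
rewrite (reindex_onto ins rem) /=; last first.
  move=> f /andP [inf /existsP [a /eqP fa]]; apply: ins_rem => //.
  by rewrite (pos_hit fa).
rewrite mulr_sumr; apply: eq_big => g.
  apply/idP/idP.
    move=> /andP [/andP [ii /existsP [a /eqP fa]] /eqP E]; rewrite -E.
    by apply: rem_inc => //; rewrite (pos_hit fa).
  move=> ig; rewrite rem_ins // eqxx andbT.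
  apply/andP; split; first exact: (ins_inc ig).
  by apply/existsP; exists (cp g); rewrite insE0.
move=> /andP [/andP [ii _] /eqP E].
have ig : incf g by rewrite -E; apply: rem_inc => //; rewrite (pos_hit (insE0 g) ii) insE0.
rewrite det_ins // mulrA -exprD mulrA -exprD; congr (_ ^+ _ * _).
have := sgn_ins ig; move: (\sum_(a < q.+2) _)%N (\sum_(b < q.+1) (g b - b))%N (cp g : nat) (i0 : nat) (j0 : nat) => A B C D J; lia.
Qed.

End Cul.

Lemma cullis_minor0 (F : fieldType) n k (hk : (1 < k)%N) (hnk : (k <= n)%N)
  (X : 'M[F]_(n, k)) (i0 : 'I_n) (j0 : 'I_k) :
  (forall i, X i j0 = (i == i0)%:R) -> cullis X = 0 -> cullis (row' i0 (col' j0 X)) = 0.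
Proof.
move: X i0 j0 hk hnk; case: n => [|[|m]]; case: k => [|[|q]] //= X i0 j0 _ _ hX.
rewrite (cullis_exp hX) => /eqP; rewrite mulf_eq0 signr_eq0 /= => /eqP.
done.
Qed.


Theorem mainTheorem6 (F : fieldType) (n k : nat) (hk : (1 < k)%N) (hnk : (k <= n)%N)
  (K : 'M[F]_(n, k) -> Prop) (V : {vspace 'M[F]_(n, k)}) (hKV : linvar_dir K V)
  (Bs : {set 'I_n * 'I_k}) (hB : mcobasis V Bs)
  (j' : 'I_k) (hj' : forall i : 'I_n, (i, j') \notin Bs)
  (i' : 'I_n) (c : 'I_n -> F) :
  let K' := minor_variety K i' j' c in
  let Brow := [set e in Bs | e.1 == i'] in
  [/\ is_linvar K',
      (forall V' : {vspace 'M[F]_(n.-1, k.-1)}, linvar_dir K' V' ->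
         (n.-1 * k.-1 - \dim V' + #|Brow| <= n * k - \dim V)%N),
      (forall (V' : {vspace 'M[F]_(n.-1, k.-1)}) (Bs' : {set 'I_n.-1 * 'I_k.-1}),
         linvar_dir K' V' -> mcobasis V' Bs' ->
         mcoindep V (Brow :|: [set iota_ij i' j' e | e in Bs']))
    & ((forall X, K X -> cullis X = 0) ->
       (forall i, c i = (i == i')%:R) ->
       forall Y, K' Y -> cullis Y = 0)].
Proof.
move=> K' Brow; split.
- by eexists; exact: (@dirKp F n k K V hKV Bs hB j' hj' i' c).
- by move=> V'' hV; exact: (@partb F n k K V hKV Bs hB j' hj' i' c hk hnk V'' hV).
- by move=> V'' Bs' hV hB'; exact: (@partc F n k K V hKV Bs hB j' hj' i' c V'' Bs' hV hB').
- move=> h0 hc Y [X [KX cX ->]].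
  apply: (cullis_minor0 hk hnk) (h0 X KX) => i.
  by rewrite cX hc.
Qed.
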